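(* Let $\Gamma$ be a countable group and $c\in\mathrm Z^2(\Gamma,\mathbb R)$. For $r\in\mathbb R$ let $c_r=\exp(irc)\in\mathrm Z^2(\Gamma,\mathbb T)$. If $c_r\in\mathrm B^2(\Gamma,\mathbb T)$ for every $r\in\mathbb R$, then $c\in\mathrm B^2(\Gamma,\mathbb R)$.
   Context: $\mathbb R$ and $\mathbb T$ carry the trivial $\Gamma$-action; $\mathrm Z^2$ and $\mathrm B^2$ denote group 2-cocycles ($c(g,h)+c(gh,k)=c(g,hk)+c(h,k)$) and 2-coboundaries ($c(g,h)=b(g)+b(h)-b(gh)$, multiplicatively for $\mathbb T$). *)

(* Defs.v *)
From Stdlib Require Import Reals.
From Coquelicot Require Import Coquelicot.
Open Scope R_scope.

Definition is_group {G : Type} (mul : G -> G -> G) (e : G) (inv : G -> G) : Prop :=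
  (forall x y z, mul (mul x y) z = mul x (mul y z)) /\
  (forall x, mul e x = x) /\ (forall x, mul x e = x) /\
  (forall x, mul (inv x) x = e) /\ (forall x, mul x (inv x) = e).

Definition countable (G : Type) : Prop :=
  exists f : G -> nat, forall x y, f x = f y -> x = y.

Definition cocycle2_R {G : Type} (mul : G -> G -> G) (c : G -> G -> R) : Prop :=
  forall g h k, c g h + c (mul g h) k = c g (mul h k) + c h k.

Definition coboundary2_R {G : Type} (mul : G -> G -> G) (c : G -> G -> R) : Prop :=
  exists b : G -> R, forall g h, c g h = b g + b h - b (mul g h).

Definition in_T (z : C) : Prop := Cmod z = 1.

Definition coboundary2_T {G : Type} (mul : G -> G -> G) (c : G -> G -> C) : Prop :=
  exists b : G -> C, (forall g, in_T (b g)) /\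
    forall g h, c g h = Cmult (Cmult (b g) (b h)) (Cinv (b (mul g h))).

Definition expi (x : R) : C := (cos x, sin x).

Definition c_r {G : Type} (r : R) (c : G -> G -> R) : G -> G -> C :=
  fun g h => expi (r * c g h).

(* Main.v *)
Require Import Defs.
From Stdlib Require Import Reals Lra Lia Psatz ZArith List ClassicalEpsilon.
From Coquelicot Require Import Coquelicot.
Open Scope R_scope.

Lemma lift_T (z : C) : Cmod z = 1 -> exists t, z = expi t.
Proof.
  destruct z as [a b]. unfold Cmod; cbn [fst snd]. intro H.
  assert (Hs : a * a + b * b = 1).
  { assert (H0 : 0 <= a ^ 2 + b ^ 2) by nra.
    pose proof (sqrt_sqrt _ H0) as H1. rewrite H in H1. nra. }
  assert (Ha : -1 <= a <= 1) by nra.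
  assert (Hsq : sqrt (1 - Rsqr a) = Rabs b).
  { replace (1 - Rsqr a) with (Rsqr b) by (unfold Rsqr; lra). apply sqrt_Rsqr_abs. }
  destruct (Rle_or_lt 0 b) as [Hb|Hb].
  - exists (acos a). unfold expi. rewrite cos_acos, sin_acos; auto.
    rewrite Hsq, Rabs_right; auto; lra.
  - exists (- acos a). unfold expi. rewrite cos_neg, sin_neg, cos_acos, sin_acos; auto.
    rewrite Hsq, Rabs_left; auto. f_equal; lra.
Qed.

Lemma expi_eq (A B : R) : expi A = expi B -> exists k : Z, A = B + 2 * PI * IZR k.
Proof.
  unfold expi. intro H. injection H as H1 H2.
  assert (Hc : cos (A - B) = 1).
  { rewrite cos_minus, H1, H2. pose proof (sin2_cos2 B). unfold Rsqr in H. lra. }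
  assert (Hs : sin ((A - B) / 2) = 0).
  { pose proof (cos_2a_sin ((A - B)/2)). replace (2 * ((A - B) / 2)) with (A - B) in H by field.
    rewrite Hc in H. assert (sin ((A-B)/2) * sin ((A-B)/2) = 0) by lra. nra. }
  destruct (sin_eq_0_0 _ Hs) as [k Hk]. exists k. lra.
Qed.

Lemma expi_mul (a b : R) : Cmult (expi a) (expi b) = expi (a + b).
Proof. unfold expi, Cmult; simpl. rewrite cos_plus, sin_plus. f_equal; lra. Qed.

Lemma expi_inv (a : R) : Cinv (expi a) = expi (- a).
Proof.
  unfold expi, Cinv; simpl. rewrite cos_neg, sin_neg.
  pose proof (sin2_cos2 a). unfold Rsqr in H.
  replace (cos a * (cos a * 1) + sin a * (sin a * 1)) with 1 by lra. f_equal; field.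
Qed.

Fixpoint ev {A : Type} (phi : A -> R) (l : list (Z * A)) : R :=
  match l with nil => 0 | (k, a) :: t => IZR k * phi a + ev phi t end.

Definition scl {A : Type} (z : Z) (l : list (Z * A)) : list (Z * A) :=
  map (fun p => (z * fst p, snd p)%Z) l.

Lemma ev_app {A} (phi : A -> R) l1 l2 : ev phi (l1 ++ l2) = ev phi l1 + ev phi l2.
Proof. induction l1 as [|[k a] t IH]; simpl; [lra|]. rewrite IH; lra. Qed.

Lemma ev_scl {A} (phi : A -> R) z l : ev phi (scl z l) = IZR z * ev phi l.
Proof. induction l as [|[k a] t IH]; simpl; [lra|]. rewrite IH, mult_IZR; lra. Qed.

Definition allin {A} (D : A -> Prop) (l : list (Z * A)) : Prop :=
  forall p, In p l -> D (snd p).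

Lemma allin_app {A} (D : A -> Prop) l1 l2 : allin D l1 -> allin D l2 -> allin D (l1 ++ l2).
Proof. unfold allin; intros H1 H2 p Hp. apply in_app_iff in Hp as [Hp|Hp]; auto. Qed.

Lemma allin_scl {A} (D : A -> Prop) z l : allin D l -> allin D (scl z l).
Proof. unfold allin, scl; intros H p Hp. apply in_map_iff in Hp as [q [<- Hq]]. simpl. auto. Qed.

Lemma ev_agree {A} (D : A -> Prop) b b' l : allin D l -> (forall h, D h -> b h = b' h) -> ev b l = ev b' l.
Proof.
  induction l as [|[k a] t IH]; simpl; intros Hl Hb; auto.
  rewrite Hb, IH; auto.
  - intros p Hp; apply Hl; simpl; auto.
  - apply (Hl (k, a)); simpl; auto.
Qed.

Definition evC {G} (c : G -> G -> R) (x : list (Z * (G * G))) : R :=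
  ev (fun p => c (fst p) (snd p)) x.

Definition evB {G} (mul : G -> G -> G) (phi : G -> R) (x : list (Z * (G * G))) : R :=
  ev (fun p => phi (fst p) + phi (snd p) - phi (mul (fst p) (snd p))) x.

Definition good {G} (mul : G -> G -> G) (c : G -> G -> R) (D : G -> Prop) (b : G -> R) : Prop :=
  forall x n, allin D n -> (forall phi, evB mul phi x = ev phi n) -> evC c x = ev b n.

Lemma good_ext {G} mul c (D D' : G -> Prop) b b' :
  good mul c D b -> (forall h, D' h -> D h) -> (forall h, D' h -> b h = b' h) -> good mul c D' b'.
Proof.
  intros Hg HD Hb x n Hn Hx. rewrite <- (ev_agree D' b b' n Hn Hb).
  apply Hg; auto. intros p Hp; apply HD, Hn, Hp.
Qed.

Lemma split_n {G} (D : G -> Prop) g n :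
  allin (fun h => D h \/ h = g) n ->
  exists nD k, allin D nD /\ forall phi, ev phi n = ev phi nD + IZR k * phi g.
Proof.
  induction n as [|[k a] t IH]; intros Hn.
  - exists nil, 0%Z. split. { intros p []. } intros; simpl; lra.
  - destruct IH as [nD [k' [H1 H2]]]. { intros p Hp; apply Hn; simpl; auto. }
    destruct (Hn (k, a) (or_introl eq_refl)) as [Ha|Ha]; simpl in Ha.
    + exists ((k, a) :: nD), k'. split.
      * intros p [<-|Hp]; simpl; auto.
      * intros phi; simpl; rewrite H2; lra.
    + subst a. exists nD, (k + k')%Z. split; auto.
      intros phi; simpl; rewrite H2, plus_IZR; lra.
Qed.

Definition Qp {G} (mul : G -> G -> G) (D : G -> Prop) (g : G)
  (p : list (Z * (G * G)) * list (Z * G) * Z) : Prop :=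
  let '(x0, n0, k0) := p in
  k0 <> 0%Z /\ allin D n0 /\ forall phi, evB mul phi x0 = ev phi n0 + IZR k0 * phi g.

Definition ext {G} (mul : G -> G -> G) (c : G -> G -> R) (D : G -> Prop) (b : G -> R) (g : G) : R :=
  let '(x0, n0, k0) := epsilon (inhabits (nil, nil, 0%Z)) (Qp mul D g) in
  (evC c x0 - ev b n0) / IZR k0.

Lemma evB_app {G} mul (phi : G -> R) l1 l2 : evB mul phi (l1 ++ l2) = evB mul phi l1 + evB mul phi l2.
Proof. apply ev_app. Qed.
Lemma evB_scl {G} mul (phi : G -> R) z l : evB mul phi (scl z l) = IZR z * evB mul phi l.
Proof. apply ev_scl. Qed.
Lemma evC_app {G} (c : G -> G -> R) l1 l2 : evC c (l1 ++ l2) = evC c l1 + evC c l2.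
Proof. apply ev_app. Qed.
Lemma evC_scl {G} (c : G -> G -> R) z l : evC c (scl z l) = IZR z * evC c l.
Proof. apply ev_scl. Qed.

Lemma step {G} mul c (D D' : G -> Prop) b b' g :
  good mul c D b -> ~ D g -> (forall h, D' h -> D h \/ h = g) ->
  (forall h, D h -> b' h = b h) -> b' g = ext mul c D b g -> good mul c D' b'.
Proof.
  intros Hg HnD HD' Hb Hbg x n Hn Hx.
  destruct (split_n D g n) as [nD [k [HnD' Hsplit]]].
  { intros p Hp; apply HD', Hn, Hp. }
  rewrite Hsplit, (ev_agree D b' b nD HnD' Hb).
  assert (HxD : forall phi, evB mul phi x = ev phi nD + IZR k * phi g).
  { intros phi; rewrite Hx; apply Hsplit. }
  destruct (classic (exists p, Qp mul D g p)) as [Hex|Hnex].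
  - pose proof (epsilon_spec (inhabits (nil, nil, 0%Z)) (Qp mul D g) Hex) as Hsp.
    unfold ext in Hbg.
    destruct (epsilon (inhabits (nil, nil, 0%Z)) (Qp mul D g)) as [[x0 n0] k0].
    destruct Hsp as [Hk0 [Hn0 Hx0]].
    assert (Hk0R : IZR k0 <> 0) by (apply not_0_IZR; auto).
    pose proof (Hg (scl k0 x ++ scl (- k) x0) (scl k0 nD ++ scl (- k) n0)) as E.
    rewrite evC_app, !evC_scl, ev_app, !ev_scl in E.
    rewrite Hbg. rewrite opp_IZR in E.
    assert (E' : IZR k0 * evC c x + - IZR k * evC c x0 = IZR k0 * ev b nD + - IZR k * ev b n0).
    { apply E.
      - apply allin_app; apply allin_scl; auto.
      - intros phi. rewrite evB_app, !evB_scl, ev_app, !ev_scl, HxD, Hx0, opp_IZR. ring. }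
    apply (Rmult_eq_reg_l (IZR k0)); auto.
    replace (IZR k0 * evC c x) with (IZR k0 * ev b nD + - IZR k * ev b n0 - - IZR k * evC c x0) by lra.
    field; auto.
  - destruct (Z.eq_dec k 0) as [->|Hk].
    + rewrite Rmult_0_l, Rplus_0_r. apply Hg; auto.
      intros phi; rewrite HxD; simpl; lra.
    + exfalso; apply Hnex. exists (x, nD, k). simpl. auto.
Qed.

Lemma integ {G} (mul : G -> G -> G) (c : G -> G -> R) (r : R) (th : G -> R) :
  (forall g h, expi (r * c g h) = expi (th g + th h - th (mul g h))) ->
  forall x, exists z : Z, r * evC c x = evB mul th x + 2 * PI * IZR z.
Proof.
  intros Hth x. induction x as [|[k [g h]] t [z IH]].
  - exists 0%Z. unfold evC, evB; simpl. lra.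
  - destruct (expi_eq _ _ (Hth g h)) as [m Hm].
    exists (k * m + z)%Z. unfold evC, evB in *; simpl in *.
    rewrite plus_IZR, mult_IZR.
    replace (r * (IZR k * c g h + ev (fun p : G * G => c (fst p) (snd p)) t))
      with (IZR k * (r * c g h) + r * ev (fun p : G * G => c (fst p) (snd p)) t) by ring.
    rewrite Hm, IH. ring.
Qed.

Lemma base {G} (mul : G -> G -> G) (c : G -> G -> R)
  (Hr : forall r : R, coboundary2_T mul (c_r r c)) (b : G -> R) :
  good mul c (fun _ => False) b.
Proof.
  intros x n Hn Hx.
  assert (Hn0 : forall phi, ev phi n = 0).
  { destruct n as [|p t]; simpl; auto. exfalso. apply (Hn p); simpl; auto. }
  rewrite Hn0.
  destruct (Req_dec (evC c x) 0) as [H0|H0]; auto. exfalso.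
  destruct (Hr (PI / evC c x)) as [bb [Hb Hbc]].
  set (th := fun g => proj1_sig (constructive_indefinite_description _ (lift_T _ (Hb g)))).
  assert (Hth : forall g, bb g = expi (th g)).
  { intro g. unfold th. destruct (constructive_indefinite_description _ _). simpl. auto. }
  assert (Hexp : forall g h, expi (PI / evC c x * c g h) = expi (th g + th h - th (mul g h))).
  { intros g h. pose proof (Hbc g h) as E. unfold c_r in E. rewrite E, !Hth, expi_inv, !expi_mul.
    f_equal; ring. }
  destruct (integ mul c _ th Hexp x) as [z Hz].
  rewrite Hx, Hn0 in Hz.
  replace (PI / evC c x * evC c x) with PI in Hz by (field; auto).
  pose proof PI_RGT_0.
  assert (Hz2 : IZR z * 2 = 1) by nra.
  destruct (Z_lt_le_dec z 1) as [Hl|Hl].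
  - apply Z.lt_le_pred in Hl. simpl in Hl. apply IZR_le in Hl. lra.
  - apply IZR_le in Hl. lra.
Qed.

Fixpoint bs {G} (mul : G -> G -> G) (c : G -> G -> R) (f : G -> nat) (e : G) (N : nat) : G -> R :=
  match N with
  | O => fun _ => 0
  | S M => fun h => if Nat.eqb (f h) M
                   then ext mul c (fun h => (f h < M)%nat) (bs mul c f e M)
                          (epsilon (inhabits e) (fun g => f g = M))
                   else bs mul c f e M h
  end.

Lemma bs_good {G} mul c (f : G -> nat) e
  (Hr : forall r : R, coboundary2_T mul (c_r r c)) (Hf : forall x y, f x = f y -> x = y) :
  forall N, good mul c (fun h => (f h < N)%nat) (bs mul c f e N).
Proof.
  induction N as [|N IH].
  - apply (good_ext mul c (fun _ => False) _ (bs mul c f e 0) (bs mul c f e 0)).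
    + apply base; auto.
    + intros h H; lia.
    + auto.
  - destruct (classic (exists g, f g = N)) as [Hex|Hnex].
    + pose proof (epsilon_spec (inhabits e) (fun g => f g = N) Hex) as Hg. simpl in Hg.
      set (g := epsilon (inhabits e) (fun g => f g = N)) in *.
      apply (step mul c (fun h => (f h < N)%nat) _ (bs mul c f e N) _ g IH).
      * lia.
      * intros h Hh. destruct (Nat.eq_dec (f h) N) as [E|E].
        -- right. apply Hf. lia.
        -- left. lia.
      * intros h Hh. simpl. destruct (Nat.eqb_spec (f h) N); auto. lia.
      * simpl. destruct (Nat.eqb_spec (f g) N); [reflexivity|lia].
    + apply (good_ext mul c _ _ (bs mul c f e N) _ IH).
      * intros h Hh. destruct (Nat.eq_dec (f h) N) as [E|E].
        -- exfalso; apply Hnex; eauto.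
        -- lia.
      * intros h Hh. simpl. destruct (Nat.eqb_spec (f h) N); auto.
        exfalso; apply Hnex; eauto.
Qed.

Lemma bs_stable {G} mul c (f : G -> nat) e g :
  forall M, (f g < M)%nat -> bs mul c f e M g = bs mul c f e (S (f g)) g.
Proof.
  induction M as [|M IH]; intros H; [lia|].
  destruct (Nat.eq_dec (f g) M) as [E|E].
  - subst M. reflexivity.
  - simpl. destruct (Nat.eqb_spec (f g) M); [lia|]. apply IH. lia.
Qed.

Theorem corollary6p2 (G : Type) (mul : G -> G -> G) (e : G) (inv : G -> G)
  (HG : is_group mul e inv) (Hcount : countable G)
  (c : G -> G -> R) (Hc : cocycle2_R mul c)
  (Hr : forall r : R, coboundary2_T mul (c_r r c)) :
  coboundary2_R mul c.
Proof.
  destruct Hcount as [f Hf].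
  exists (fun g => bs mul c f e (S (f g)) g).
  intros g h.
  set (N := S (Nat.max (f g) (Nat.max (f h) (f (mul g h))))).
  pose proof (bs_good mul c f e Hr Hf N ((1%Z, (g, h)) :: nil)
                ((1%Z, g) :: (1%Z, h) :: ((-1)%Z, mul g h) :: nil)) as E.
  unfold evC, evB in E; simpl in E.
  rewrite <- (bs_stable mul c f e g N), <- (bs_stable mul c f e h N),
          <- (bs_stable mul c f e (mul g h) N) by lia.
  assert (E' : 1 * c g h + 0 = 1 * bs mul c f e N g + (1 * bs mul c f e N h + (-1 * bs mul c f e N (mul g h) + 0))).
  { apply E.
    - intros p Hp. simpl in Hp. destruct Hp as [<-|[<-|[<-|[]]]]; simpl; lia.
    - intros phi. lra. }
  lra.
Qed.
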